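(* Let $B$ be a composition of $n$ finite Blaschke products each of degree $2$. Then $B$ has at most $n$ distinct critical values.
   Context: A finite Blaschke product of degree $d$ is $B(z)=\gamma\prod_{j=1}^d \frac{z-a_j}{1-\overline{a_j}z}$ with $a_j\in\mathbb{D}$ and $|\gamma|=1$. The set of critical values of $B$ is $\{w\in\mathbb{D}: w=B(z)\text{ for some } z\in\mathbb{D} \text{ with } B'(z)=0\}$. *)

(* Defs.v *)
From HB Require Import structures.
From mathcomp Require Import all_boot all_order all_algebra.
From mathcomp Require Import all_classical all_reals all_analysis.
From mathcomp Require Import complex.
Set Implicit Arguments. Unset Strict Implicit. Unset Printing Implicit Defensive.
Import Order.TTheory GRing.Theory Num.Theory ComplexField.
Import numFieldNormedType.Exports.
Local Open Scope ring_scope.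
Local Open Scope classical_set_scope.

Definition blaschke (R : realType) (gamma : R[i]) (a : seq R[i]) : R[i] -> R[i] :=
  fun z => gamma * \prod_(aj <- a) ((z - aj) / (1 - aj^* * z)).

Definition blaschke_data (R : realType) (d : nat) (gamma : R[i]) (a : seq R[i]) : Prop :=
  `|gamma| = 1 /\ size a = d /\ (forall aj, aj \in a -> `|aj| < 1).

Definition blaschke_comp (R : realType) (l : seq (R[i] * seq R[i])) : R[i] -> R[i] :=
  foldr (fun p f => blaschke p.1 p.2 \o f) id l.

(* Critical values of f: images of points z of the disk with f'(z) = 0
   (complex derivative: derivative of f : C -> C in direction 1 over the scalar field C). *)
Definition critical_values (R : realType) (f : R[i] -> R[i]) : set R[i] :=
  [set w | `|w| < 1 /\ exists z, `|z| < 1 /\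
       is_derive (z : R[i]^o) (1 : R[i]^o) (f : R[i]^o -> R[i]^o) 0 /\ f z = w].

(* Main.v *)
Require Import Defs.
From HB Require Import structures.
From mathcomp Require Import all_boot all_order all_algebra.
From mathcomp Require Import all_classical all_reals all_analysis.
From mathcomp Require Import complex.
From mathcomp Require Import ring lra.
Import Order.TTheory GRing.Theory Num.Theory ComplexField.
Import numFieldNormedType.Exports.
Local Open Scope ring_scope.
Local Open Scope classical_set_scope.

Section Der.
Variable K : numFieldType.

Lemma derive1_compK (f g : K -> K) x :
  derivable f x 1 -> derivable g (f x) 1 ->
  (g \o f)^`() x = g^`()%classic (f x) * f^`()%classic x.
Proof.
move=> /derivable1_diffP df /derivable1_diffP dg.
rewrite derive1E'; last exact/differentiable_comp.
rewrite diff_comp // !derive1E' //= -[X in 'd  _ _ X = _]mulr1.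
by rewrite [LHS]linearZ mulrC.
Qed.

Lemma is_derive_compK (f g : K -> K) (x a b : K) :
  is_derive (g x) 1 f a -> is_derive x 1 g b ->
  is_derive x 1 (f \o g) (a * b).
Proof.
move=> [fgxv <-{a}] [gv <-{b}]; apply: (@DeriveDef _ _ _ _ _ (f \o g)).
  apply/derivable1_diffP/differentiable_comp; first exact/derivable1_diffP.
  by move/derivable1_diffP in fgxv.
by rewrite -derive1E (@derive1_compK g f x gv fgxv) 2!derive1E.
Qed.

Lemma is_deriveVK (f : K -> K) (x t v : K) :
  f x != 0 -> is_derive x v f t ->
  is_derive x v (fun y => (f y)^-1) (- (f x) ^- 2 *: t).
Proof.
move=> fxNZ Df.
constructor; first by apply: derivableV => //; case: Df.
by rewrite deriveV //; case: Df => _ ->.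
Qed.

End Der.

Section G.
Local Open Scope ring_scope.
Variable K : numClosedFieldType.
Implicit Types a z c : K.

Definition mob a z : K := (z - a) / (1 - a^* * z).

Lemma sqn_lt1 a : `|a| < 1 -> `|a| ^+ 2 < 1.
Proof. by move=> h; rewrite expr_lt1. Qed.

Lemma den_nz {a z} : `|a| < 1 -> `|z| < 1 -> 1 - a^* * z != 0.
Proof.
move=> ha hz; rewrite subr_eq0; apply/eqP => e.
have : `|a^* * z| < 1.
  rewrite normrM norm_conjC.
  have := ltr_pM (normr_ge0 a) (normr_ge0 z) ha hz.
  by rewrite mulr1.
by rewrite -e normr1 ltxx.
Qed.

Lemma mob_lt1 a z : `|a| < 1 -> `|z| < 1 -> `|mob a z| < 1.
Proof.
move=> ha hz; have nz := den_nz ha hz.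
rewrite /mob normrM normfV ltr_pdivrMr ?normr_gt0 // mul1r.
have key : `|1 - a^* * z| ^+ 2 - `|z - a| ^+ 2 = (1 - `|a| ^+ 2) * (1 - `|z| ^+ 2).
  rewrite !normCK !rmorphB /= !rmorphM /= rmorph1 conjCK; ring.
have : `|z - a| ^+ 2 < `|1 - a^* * z| ^+ 2.
  rewrite -subr_gt0 key; apply: mulr_gt0; rewrite subr_gt0; exact: sqn_lt1.
by rewrite (ltr_pXn2r (n := 2)) // nnegrE normr_ge0.
Qed.


Definition mobd a z : K := (1 - a * a^*) / (1 - a^* * z) ^+ 2.
Definition B2 (g a1 a2 z : K) : K := g * (mob a1 z * mob a2 z).
Definition B2d (g a1 a2 z : K) : K := g * (mobd a1 z * mob a2 z + mob a1 z * mobd a2 z).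
Definition Npol (a1 a2 z : K) : K :=
  (1 - a1 * a1^*) * ((z - a2) * (1 - a2^* * z)) + (1 - a2 * a2^*) * ((z - a1) * (1 - a1^* * z)).

Lemma B2d_N g a1 a2 z : 1 - a1^* * z != 0 -> 1 - a2^* * z != 0 ->
  B2d g a1 a2 z * ((1 - a1^* * z) ^+ 2 * (1 - a2^* * z) ^+ 2) = g * Npol a1 a2 z.
Proof. by move=> h1 h2; rewrite /B2d /mobd /mob /Npol; field; rewrite h1 h2. Qed.

Lemma A_gt0 a : `|a| < 1 -> 0 < 1 - a * a^*.
Proof. by move=> h; rewrite -normCK subr_gt0 sqn_lt1. Qed.

Lemma Ap_gt0 a : 0 < 1 + a * a^*.
Proof. by rewrite -normCK (lt_le_trans ltr01) // lerDl exprn_ge0 // normr_ge0. Qed.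

Lemma N_unique a1 a2 c1 c2 : `|a1| < 1 -> `|a2| < 1 -> `|c1| < 1 -> `|c2| < 1 ->
  Npol a1 a2 c1 = 0 -> Npol a1 a2 c2 = 0 -> c1 = c2.
Proof.
move=> h1 h2 hc1 hc2 N1 N2.
set A1 := 1 - a1 * a1^*; set A2 := 1 - a2 * a2^*.
set al := A1 * a2^* + A2 * a1^*.
set alc := A1 * a2 + A2 * a1.
set be := A1 * (1 + a2 * a2^*) + A2 * (1 + a1 * a1^*).
have eN z : Npol a1 a2 z = - al * z ^+ 2 + be * z - alc.
  by rewrite /Npol /al /alc /be /A1 /A2; ring.
have ec : alc = al^*.
  rewrite /alc /al /A1 /A2 !rmorphD /= !rmorphM /= !rmorphB /= rmorph1 !rmorphM /= !conjCK; ring.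
have be_gt0 : 0 < be.
  by rewrite /be addr_gt0 // mulr_gt0 ?A_gt0 ?Ap_gt0.
have key : (c1 - c2) * (alc - al * c1 * c2) = c2 * Npol a1 a2 c1 - c1 * Npol a1 a2 c2.
  by rewrite !eN; ring.
move: key; rewrite N1 N2 !mulr0 subrr => /eqP; rewrite mulf_eq0 => /orP [].
  by rewrite subr_eq0 => /eqP.
rewrite subr_eq0 => /eqP ea.
have [al0 | aln0] := eqVneq al 0.
  have alc0 : alc = 0 by rewrite ec al0 rmorph0.
  move: N1 N2; rewrite !eN al0 alc0 oppr0 !mul0r !add0r !addr0 => /eqP; rewrite mulf_eq0 (gt_eqF be_gt0) /= => /eqP ->.
  by move=> /eqP; rewrite mulf_eq0 (gt_eqF be_gt0) /= => /eqP ->.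
exfalso.
have : `|al| * (1 - `|c1| * `|c2|) = 0.
  rewrite mulrBr mulr1 -!normrM mulrA -ea ec norm_conjC; exact: subrr.
apply/eqP; rewrite mulf_eq0 negb_or normr_eq0 aln0 /= subr_eq0.
apply/eqP => e.
have : `|c1| * `|c2| < 1.
  have := ltr_pM (normr_ge0 c1) (normr_ge0 c2) hc1 hc2.
  by rewrite mulr1.
by rewrite -e ltxx.
Qed.

Lemma is_derive_mob {a z} : 1 - a^* * z != 0 -> is_derive z 1 (mob a) (mobd a z).
Proof.
move=> nz.
have h1 : is_derive z (1:K) (fun y : K => y - a) 1.
  have := @is_deriveB _ _ _ id (cst a) z 1 1 0 _ _.
  have -> : (id - cst a) = (fun y : K => y - a) by apply/funext.
  by rewrite subr0; apply.
have h2 : is_derive z (1:K) (fun y : K => 1 - a^* * y) (- a^*).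
  have hz : is_derive z (1:K) (fun y : K => a^* * y) (a^*).
    have := @is_deriveZ _ _ _ id (a^*) z 1 1 _.
    have -> : (a^* \*: id) = (fun y : K => a^* * y) by apply/funext.
    move=> H; apply: is_derive_eq (H (is_derive_id _ _)) _; by rewrite [_%:A]mulr1.
  have := @is_deriveB _ _ _ (cst (1:K)) (fun y : K => a^* * y) z 1 0 (a^*) _ hz.
  have -> : (cst 1 - (fun y : K => a^* * y)) = (fun y : K => 1 - a^* * y) by apply/funext.
  by rewrite sub0r; apply.
have h3 := @is_deriveVK K (fun y : K => 1 - a^* * y) z _ 1 nz h2.
have h4 := is_deriveM h1 h3.
have -> : mob a = (fun y : K => y - a) * (fun y : K => (1 - a^* * y)^-1).
  by apply/funext => y.
move: h4; set F := (_ * _); have -> : F = (fun y : K => y - a) * (fun y : K => (1 - a^* * y)^-1) by [].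
move=> H; apply: is_derive_eq H _.
have sc : forall x y : K, x *: y = x * y by [].
rewrite !sc mulr1 /mobd /mob.
field; exact: nz.
Qed.

Lemma is_derive_B2 (g a1 a2 z : K) : 1 - a1^* * z != 0 -> 1 - a2^* * z != 0 ->
  is_derive z 1 (B2 g a1 a2) (B2d g a1 a2 z).
Proof.
move=> n1 n2.
have d1 := is_derive_mob n1.
have d2 := is_derive_mob n2.
have d3 := is_deriveM d1 d2.
have d4 := @is_deriveZ _ _ _ (mob a1 * mob a2) g z 1 _ d3.
have -> : B2 g a1 a2 = g \*: (mob a1 * mob a2) by apply/funext.
apply: is_derive_eq d4 _.
have sc : forall x y : K, x *: y = x * y by [].
by rewrite !sc /B2d; ring.
Qed.

End G.
Arguments mob {K}. Arguments mobd {K}. Arguments B2 {K}. Arguments B2d {K}. Arguments Npol {K}.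
Arguments mob_lt1 {K a z}. Arguments den_nz {K a z}. Arguments is_derive_mob {K a z}.
Arguments is_derive_B2 {K g a1 a2 z}. Arguments N_unique {K a1 a2 c1 c2}.
Arguments B2d_N {K g a1 a2 z}. Arguments is_derive_compK {K f g x a b}.

Section RR.
Variable R : realType.
Local Notation C := (R[i]).

Lemma blaschkeE {g : C} {a : seq C} : size a = 2%N ->
  blaschke g a = B2 g (nth 0 a 0) (nth 0 a 1).
Proof.
case: a => [|a1 [|a2 [|? ?]]] //= _.
by apply/funext => z; rewrite /blaschke /B2 !big_cons big_nil mulr1.
Qed.

Fixpoint Dcomp (l : seq (C * seq C)) (z : C) : C :=
  match l with
  | [::] => 1
  | p :: l' => B2d p.1 (nth 0 p.2 0) (nth 0 p.2 1) (blaschke_comp l' z) * Dcomp l' z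
  end.

Lemma comp_ind (l : seq (C * seq C)) :
  (forall p, p \in l -> blaschke_data 2 p.1 p.2) -> forall z : C, `|z| < 1 ->
  `|blaschke_comp l z| < 1 /\
  is_derive (z : C^o) (1 : C^o) (blaschke_comp l : C^o -> C^o) (Dcomp l z).
Proof.
elim: l => [|p l IH] hl z hz.
  by split => //=; exact: is_derive_id.
have hp : blaschke_data 2 p.1 p.2 by apply: hl; rewrite mem_head.
have [hlt hd] : `|blaschke_comp l z| < 1 /\
  is_derive (z : C^o) (1 : C^o) (blaschke_comp l : C^o -> C^o) (Dcomp l z).
  by apply: IH => // q hq; apply: hl; rewrite in_cons hq orbT.
case: hp => hg [hs ha].
have ha1 : `|nth 0 p.2 0| < 1 by apply: ha; rewrite mem_nth // hs.
have ha2 : `|nth 0 p.2 1| < 1 by apply: ha; rewrite mem_nth // hs.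
have eB := @blaschkeE p.1 p.2 hs.
have -> : blaschke_comp (p :: l) = B2 p.1 (nth 0 p.2 0) (nth 0 p.2 1) \o blaschke_comp l.
  by rewrite /= eB.
split.
  rewrite /= /B2 normrM hg mul1r normrM.
  have := ltr_pM (normr_ge0 _) (normr_ge0 _) (mob_lt1 ha1 hlt) (mob_lt1 ha2 hlt).
  by rewrite mulr1.
apply: is_derive_compK => //.
exact: is_derive_B2 (den_nz ha1 hlt) (den_nz ha2 hlt).
Qed.

End RR.
Arguments Dcomp {R}. Arguments comp_ind {R l} _ {z}.

Lemma B2d0_N (K : numClosedFieldType) (g a1 a2 z : K) : `|g| = 1 ->
  1 - a1^* * z != 0 -> 1 - a2^* * z != 0 -> B2d g a1 a2 z = 0 -> Npol a1 a2 z = 0.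
Proof.
move=> hg n1 n2 h0; have := B2d_N (g := g) n1 n2.
rewrite h0 mul0r => /esym/eqP; rewrite mulf_eq0 -normr_eq0 hg oner_eq0 /=.
by move/eqP.
Qed.

Lemma crit_ind (R : realType) (l : seq (R[i] * seq R[i])) :
  (forall p, p \in l -> blaschke_data 2 p.1 p.2) ->
  exists s : seq R[i], (size s <= size l)%N /\
    forall z : R[i], `|z| < 1 -> Dcomp l z = 0 -> blaschke_comp l z \in s.
Proof.
elim: l => [|p l IH] hl.
  by exists [::]; split => // z _ /= /eqP; rewrite oner_eq0.
have hp : blaschke_data 2 p.1 p.2 by apply: hl; rewrite mem_head.
have hl' : forall q, q \in l -> blaschke_data 2 q.1 q.2.
  by move=> q hq; apply: hl; rewrite in_cons hq orbT.
have [s [hs hin]] := IH hl'.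
case: (hp) => hg [hsz ha].
have ha1 : `|nth 0 p.2 0| < 1 by apply: ha; rewrite mem_nth // hsz.
have ha2 : `|nth 0 p.2 1| < 1 by apply: ha; rewrite mem_nth // hsz.
have crit : forall w : R[i], `|w| < 1 -> B2d p.1 (nth 0 p.2 0) (nth 0 p.2 1) w = 0 ->
    Npol (nth 0 p.2 0) (nth 0 p.2 1) w = 0.
  by move=> w hw; apply: B2d0_N => //; apply: den_nz.
case: (pselect (exists c : R[i], `|c| < 1 /\ B2d p.1 (nth 0 p.2 0) (nth 0 p.2 1) c = 0))
  => [[c [hc hc0]] | nc].
  exists (blaschke p.1 p.2 c :: map (blaschke p.1 p.2) s); split.
    by rewrite /= ltnS size_map.
  move=> z hz /= /eqP; rewrite mulf_eq0 => /orP [/eqP h | /eqP h].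
    have [hlt _] := comp_ind hl' hz.
    have ew : blaschke_comp l z = c.
      exact: N_unique ha1 ha2 hlt hc (crit _ hlt h) (crit _ hc hc0).
    by rewrite ew mem_head.
  by rewrite in_cons map_f ?orbT // hin.
exists (map (blaschke p.1 p.2) s); split.
  by rewrite size_map (leq_trans hs).
move=> z hz /= /eqP; rewrite mulf_eq0 => /orP [/eqP h | /eqP h].
  have [hlt _] := comp_ind hl' hz.
  by exfalso; apply: nc; exists (blaschke_comp l z).
by rewrite map_f // hin.
Qed.

Theorem corollary4p4 (R : realType) (n : nat) (l : seq (R[i] * seq R[i]))
  (hn : size l = n) (hdeg : forall p, p \in l -> blaschke_data 2 p.1 p.2) :
  exists s : seq R[i], (size s <= n)%N /\
    critical_values (blaschke_comp l) `<=` [set` s].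
Proof.
have [s [hs hin]] := @crit_ind R l hdeg.
exists s; split; first by rewrite -hn.
move=> w [hw [z [hz [hd hzw]]]].
have [_ hd'] := comp_ind hdeg hz.
have E1 := @derive_val _ _ _ _ _ _ _ hd.
have E2 := @derive_val _ _ _ _ _ _ _ hd'.
have D0 : Dcomp l z = 0 by rewrite -E2 E1.
by rewrite /= -hzw; apply: hin.
Qed.
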